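(* Let $a,b\in\mathbb{R}[\sin t,\cos t]$ be real trigonometric polynomials with $b$ having only simple zeroes, consider $x'=a(t)|x|+b(t)$, and let $u(t,x)$ denote its solution with $u(0,x)=x$. Let $-\infty=x_0<x_1<\dots<x_r<x_{r+1}=+\infty$ be real numbers such that for each $i\in\{0,\dots,r\}$ and each $x\in(x_i,x_{i+1})$ all zeroes of $t\in[0,2\pi]\mapsto u(t,x)$ are simple, and their number is constant for $x\in(x_i,x_{i+1})$. Let $u(t)$ be a $2\pi$-periodic solution with $u(0)\notin\{x_1,\dots,x_r\}$. Then $u$ has an even number of zeroes in a period, all simple. Moreover: \begin{enumerate} \item If $u(0)>x_r$, then $u(t)>0$ for every $t\in\mathbb{R}$, and if $u(0)<x_1$, then $u(t)<0$ for every $t\in\mathbb{R}$. \item Assume that $x_1,\dots,x_r$ are exactly the values at $t=0$ of the solutions having a non-simple zero. If $x_1<u(0)<x_r$, then $u$ has non-definite sign, i.e. it is strictly positive for some values of $t$ and strictly negative for some other values. \end{enumerate}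
   Context: A solution is periodic if $u(0)=u(2\pi)$. A zero $t_0$ of a solution is simple if the derivative of the solution at $t_0$ (equal to $b(t_0)$) is nonzero. *)

(* Defs.v *)
From Stdlib Require Import Reals Lra Lia List.
From Coquelicot Require Import Coquelicot.
Import ListNotations.
Open Scope R_scope.

Definition trig_poly (f : R -> R) : Prop :=
  exists l : list (nat * nat * R),
    forall t, f t = fold_right
      (fun m acc => let '(i, j, c) := m in c * sin t ^ i * cos t ^ j + acc) 0 l.

Definition only_simple_zeros (f : R -> R) : Prop :=
  forall t, f t = 0 -> Derive f t <> 0.

Definition zeros_simple_on (f : R -> R) (lo hi : R) : Prop :=
  forall t, lo <= t <= hi -> f t = 0 -> Derive f t <> 0.

Definition card_set (P : R -> Prop) (n : nat) : Prop :=
  exists l : list R, NoDup l /\ (forall t, In t l <-> P t) /\ length l = n.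

Definition is_solution_map (a b : R -> R) (u : R -> R -> R) : Prop :=
  forall x, u 0 x = x /\
    forall t, is_derive (fun s => u s x) t (a t * Rabs (u t x) + b t).

(* x lies in the cell (x_i, x_{i+1}), with x_0 = -oo, x_{r+1} = +oo. *)
Definition in_cell (xs : nat -> R) (r i : nat) (x : R) : Prop :=
  (i = 0%nat \/ xs i < x) /\ (i = r \/ x < xs (S i)).

(* Main.v *)
Require Import Defs.
From Stdlib Require Import Reals Lra Lia List Classical.
From Coquelicot Require Import Coquelicot.
Open Scope R_scope.

Lemma deriv_cont (f df : R -> R) : (forall t, is_derive f t (df t)) -> continuity f.
Proof.
  intros H t. apply derivable_continuous_pt. exists (df t). apply is_derive_Reals, H.
Qed.

Lemma mono_le (g dg : R -> R) p q : p <= q ->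
  (forall t, p <= t <= q -> is_derive g t (dg t)) ->
  (forall t, p <= t <= q -> 0 <= dg t) -> g p <= g q.
Proof.
  intros Hpq Hd Hpos.
  destruct (MVT_gen g p q dg) as [c [Hc Heq]].
  - intros x Hx. rewrite Rmin_left in Hx by lra. rewrite Rmax_right in Hx by lra.
    apply Hd; lra.
  - intros x Hx. rewrite Rmin_left in Hx by lra. rewrite Rmax_right in Hx by lra.
    apply derivable_continuous_pt. exists (dg x). apply is_derive_Reals, Hd; lra.
  - rewrite Rmin_left in Hc by lra. rewrite Rmax_right in Hc by lra.
    assert (0 <= dg c) by (apply Hpos; lra).
    assert (0 <= dg c * (q - p)) by (apply Rmult_le_pos; lra). lra.
Qed.

Lemma local_sign (f : R -> R) z l : is_derive f z l -> f z = 0 -> 0 < l ->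
  exists d, 0 < d /\ forall h, 0 < h < d -> 0 < f (z + h) /\ f (z - h) < 0.
Proof.
  intros Hd Hz Hl. apply is_derive_Reals in Hd.
  destruct (Hd l Hl) as [del Hdel].
  exists del. split; [apply cond_pos|]. intros h Hh. split.
  - assert (H1 := Hdel h ltac:(lra) ltac:(rewrite Rabs_pos_eq; lra)).
    rewrite Hz, Rminus_0_r in H1.
    apply Rabs_def2 in H1. destruct H1 as [H1 H2].
    assert (0 < f (z + h) / h) by lra.
    replace (f (z+h)) with ((f (z+h)/h) * h) by (field; lra).
    apply Rmult_lt_0_compat; lra.
  - assert (H1 := Hdel (-h) ltac:(lra) ltac:(rewrite Rabs_Ropp, Rabs_pos_eq; lra)).
    rewrite Hz, Rminus_0_r in H1.
    apply Rabs_def2 in H1. destruct H1 as [H1 H2].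
    assert (0 < f (z + - h) / - h) by lra.
    replace (z - h) with (z + - h) by ring.
    replace (f (z + - h)) with ((f (z + - h)/ - h) * - h) by (field; lra).
    assert (0 < (f (z + - h) / - h) * h) by (apply Rmult_lt_0_compat; lra). lra.
Qed.

Lemma ivt_pos_neg (f : R -> R) x y : continuity f -> x <= y ->
  f x * f y <= 0 -> exists z, x <= z <= y /\ f z = 0.
Proof. intros Hc Hxy H. destruct (IVT_cor f x y Hc Hxy H) as [z Hz]. eauto. Qed.

Lemma card_ext P Q n : (forall t, P t <-> Q t) -> card_set P n -> card_set Q n.
Proof. intros H [l [H1 [H2 H3]]]. exists l. repeat split; auto; intros; [apply H, H2|apply H2, H]; auto. Qed.

Lemma card_remove P n z : card_set P n -> P z ->
  exists k, n = S k /\ card_set (fun t => P t /\ t <> z) k.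
Proof.
  intros [l [Hnd [Hin Hlen]]] Hz.
  apply Hin in Hz. destruct (in_split _ _ Hz) as [l1 [l2 ->]].
  exists (length (l1 ++ l2)). split.
  - rewrite <- Hlen, !length_app. simpl. lia.
  - exists (l1 ++ l2). split; [eapply NoDup_remove_1; eauto|]. split; auto.
    intro t. split.
    + intro Ht. split.
      * apply Hin. apply in_app_iff in Ht. apply in_app_iff. simpl. tauto.
      * intros ->. eapply NoDup_remove_2; eauto.
    + intros [Ht Hne]. apply Hin in Ht. apply in_app_iff in Ht. apply in_app_iff.
      simpl in Ht. destruct Ht as [?|[?|?]]; auto. congruence.
Qed.

Lemma card_zero P : card_set P 0 -> forall t, ~ P t.
Proof. intros [l [_ [Hin Hlen]]] t Ht. destruct l; [|discriminate]. apply Hin in Ht. destruct Ht. Qed.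

Lemma list_min (l : list R) : l <> nil -> exists z, In z l /\ forall t, In t l -> z <= t.
Proof.
  induction l as [|x l IH]; intros H; [congruence|].
  destruct l as [|y l'].
  - exists x. split; [left; auto|]. intros t [->|[]]. lra.
  - destruct IH as [z [Hz Hmin]]; [discriminate|].
    destruct (Rle_dec x z).
    + exists x. split; [left; auto|]. intros t [->|Ht]; [lra|]. specialize (Hmin t Ht). lra.
    + exists z. split; [right; auto|]. intros t [<-|Ht]; [lra|auto].
Qed.

Lemma card_min P n : card_set P (S n) -> exists z, P z /\ forall t, P t -> z <= t.
Proof.
  intros [l [_ [Hin Hlen]]]. destruct (list_min l) as [z [Hz Hm]].
  - intros ->. discriminate.
  - exists z. split; [apply Hin; auto|]. intros t Ht. apply Hm, Hin, Ht.
Qed.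
Definition pos_right (f df : R -> R) p := 0 < f p \/ (f p = 0 /\ 0 < df p).
Definition pos_left (f df : R -> R) q := 0 < f q \/ (f q = 0 /\ df q < 0).

Lemma right_pos f df p m : (forall t, is_derive f t (df t)) -> p < m ->
  (forall t, p < t <= m -> f t <> 0) -> pos_right f df p -> 0 < f m.
Proof.
  intros Hd Hpm Hnz Hp. assert (Hc := deriv_cont f df Hd).
  destruct (Rlt_dec 0 (f m)) as [|Hm]; auto. exfalso.
  assert (Hm' : f m < 0) by (assert (f m <> 0) by (apply Hnz; lra); lra).
  destruct Hp as [Hp|[Hp Hdp]].
  - destruct (ivt_pos_neg f p m Hc) as [z [Hz Hfz]]; [lra| |].
    + assert (f p * f m < 0) by (apply Rmult_pos_neg; lra). lra.
    + destruct (Req_dec z p) as [->|]; [lra|]. apply (Hnz z); auto; lra.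
  - destruct (local_sign f p (df p) (Hd p) Hp Hdp) as [d [Hd0 Hloc]].
    set (h := Rmin (d/2) (m - p)).
    assert (0 < h) by (unfold h; apply Rmin_pos; lra).
    assert (h < d) by (unfold h; generalize (Rmin_l (d/2) (m-p)); lra).
    assert (h <= m - p) by (unfold h; apply Rmin_r).
    destruct (Hloc h ltac:(lra)) as [Hph _].
    destruct (ivt_pos_neg f (p+h) m Hc) as [z [Hz Hfz]]; [lra| |].
    + assert (f (p+h) * f m < 0) by (apply Rmult_pos_neg; lra). lra.
    + apply (Hnz z); auto; lra.
Qed.

Lemma opp_deriv f df : (forall t, is_derive f t (df t)) ->
  forall t, is_derive (fun s => - f s) t (- df t).
Proof. intros Hd t. apply (is_derive_opp f t (df t)), Hd. Qed.

Lemma left_pos f df q m : (forall t, is_derive f t (df t)) -> m < q ->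
  (forall t, m <= t < q -> f t <> 0) -> pos_left f df q -> 0 < f m.
Proof.
  intros Hd Hpm Hnz Hp. assert (Hc := deriv_cont f df Hd).
  destruct (Rlt_dec 0 (f m)) as [|Hm]; auto. exfalso.
  assert (Hm' : f m < 0) by (assert (f m <> 0) by (apply Hnz; lra); lra).
  destruct Hp as [Hp|[Hp Hdp]].
  - destruct (ivt_pos_neg f m q Hc) as [z [Hz Hfz]]; [lra| |].
    + assert (f q * f m < 0) by (apply Rmult_pos_neg; lra). lra.
    + destruct (Req_dec z q) as [->|]; [lra|]. apply (Hnz z); auto; lra.
  - assert (Hd' : is_derive (fun t => - f t) q (- df q)) by (apply opp_deriv, Hd).
    destruct (local_sign (fun t => - f t) q (- df q) Hd') as [d [Hd0 Hloc]]; [lra|lra|].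
    set (h := Rmin (d/2) (q - m)).
    assert (0 < h) by (unfold h; apply Rmin_pos; lra).
    assert (h < d) by (unfold h; generalize (Rmin_l (d/2) (q-m)); lra).
    assert (h <= q - m) by (unfold h; apply Rmin_r).
    destruct (Hloc h ltac:(lra)) as [_ Hph]. simpl in Hph.
    destruct (ivt_pos_neg f m (q-h) Hc) as [z [Hz Hfz]]; [lra| |].
    + assert (f (q-h) * f m < 0) by (apply Rmult_pos_neg; lra). lra.
    + apply (Hnz z); auto; lra.
Qed.


Lemma base_case f df p q : (forall t, is_derive f t (df t)) -> p < q ->
  (forall t, p < t < q -> f t <> 0) ->
  (f p <> 0 \/ df p <> 0) -> (f q <> 0 \/ df q <> 0) ->
  (pos_right f df p <-> pos_left f df q).
Proof.
  intros Hd Hpq Hnz Hp Hq. set (m := (p + q) / 2).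
  assert (Hd' := opp_deriv f df Hd).
  assert (R1 : pos_right f df p -> 0 < f m).
  { intro H. apply (right_pos f df p m Hd); [unfold m; lra| |auto].
    intros t Ht. apply Hnz. unfold m in Ht. lra. }
  assert (R2 : ~ pos_right f df p -> f m < 0).
  { intro H. assert (0 < - f m); [|lra].
    apply (right_pos (fun s => - f s) (fun s => - df s) p m Hd'); [unfold m; lra| |].
    - intros t Ht. assert (f t <> 0) by (apply Hnz; unfold m in Ht; lra). lra.
    - unfold pos_right in *. lra. }
  assert (L1 : pos_left f df q -> 0 < f m).
  { intro H. apply (left_pos f df q m Hd); [unfold m; lra| |auto].
    intros t Ht. apply Hnz. unfold m in Ht. lra. }
  assert (L2 : ~ pos_left f df q -> f m < 0).
  { intro H. assert (0 < - f m); [|lra].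
    apply (left_pos (fun s => - f s) (fun s => - df s) q m Hd'); [unfold m; lra| |].
    - intros t Ht. assert (f t <> 0) by (apply Hnz; unfold m in Ht; lra). lra.
    - unfold pos_left in *. lra. }
  destruct (classic (pos_right f df p)); destruct (classic (pos_left f df q)).
  - tauto.
  - specialize (R1 H); specialize (L2 H0); lra.
  - specialize (R2 H); specialize (L1 H0); lra.
  - tauto.
Qed.

Lemma even_S k : Nat.Even (S k) <-> ~ Nat.Even k.
Proof.
  rewrite Nat.Even_succ. split.
  - intros Ho He. exact (Nat.Even_Odd_False k He Ho).
  - intros H. destruct (Nat.Even_or_Odd k); tauto.
Qed.

Lemma parity f df q : (forall t, is_derive f t (df t)) ->
  forall k p, p < q ->
  (forall t, p <= t <= q -> f t = 0 -> df t <> 0) ->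
  card_set (fun t => p < t < q /\ f t = 0) k ->
  (Nat.Even k <-> (pos_right f df p <-> pos_left f df q)).
Proof.
  intros Hd k. induction k as [|k IH]; intros p Hpq Hs Hc.
  - assert (Hnz : forall t, p < t < q -> f t <> 0).
    { intros t Ht H0. apply (card_zero _ Hc t). auto. }
    assert (B := base_case f df p q Hd Hpq Hnz).
    assert (f p <> 0 \/ df p <> 0).
    { destruct (Req_dec (f p) 0); [right; apply Hs; auto; lra|left; auto]. }
    assert (f q <> 0 \/ df q <> 0).
    { destruct (Req_dec (f q) 0); [right; apply Hs; auto; lra|left; auto]. }
    split; [intros _; apply B; auto|intros _; exists 0%nat; reflexivity].
  - destruct (card_min _ _ Hc) as [z [[Hz Hfz] Hmin]].
    destruct (card_remove _ _ z Hc) as [k' [Hk' Hc']]; [auto|].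
    injection Hk' as <-.
    assert (Hc2 : card_set (fun t => z < t < q /\ f t = 0) k).
    { eapply card_ext; [|exact Hc']. intros t. split.
      - intros [[Ht Hft] Hne]. assert (z <= t) by (apply Hmin; auto). split; [lra|auto].
      - intros [Ht Hft]. split; [split; [lra|auto]|lra]. }
    assert (Hdz : df z <> 0) by (apply Hs; auto; lra).
    assert (IH' := IH z ltac:(lra) ltac:(intros t Ht; apply Hs; lra) Hc2).
    assert (Hnz : forall t, p < t < z -> f t <> 0).
    { intros t Ht H0. assert (z <= t) by (apply Hmin; split; [lra|auto]). lra. }
    assert (B := base_case f df p z Hd ltac:(lra) Hnz).
    assert (f p <> 0 \/ df p <> 0).
    { destruct (Req_dec (f p) 0); [right; apply Hs; auto; lra|left; auto]. }
    specialize (B H ltac:(right; auto)).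
    assert (Hz2 : pos_left f df z <-> ~ pos_right f df z).
    { unfold pos_left, pos_right. rewrite Hfz.
      destruct (Rlt_dec 0 (df z)).
      - split; [intros [H1|[_ H1]]; lra|]. intros H1. exfalso. apply H1. right. split; auto.
      - split.
        + intros _ [H1|[_ H1]]; lra.
        + intros _. right. split; [auto|]. lra. }
    rewrite even_S, IH'. rewrite Hz2 in B.
    clear -B. destruct (classic (pos_right f df z)); destruct (classic (pos_left f df q)); tauto.
Qed.

Lemma abs_le_both x y : Rabs x <= y -> -y <= x <= y.
Proof. unfold Rabs; destruct Rcase_abs; lra. Qed.

Lemma deriv_exp_sq (v1 v2 dv1 dv2: R -> R) c t : (forall t, is_derive v1 t (dv1 t)) -> (forall t, is_derive v2 t (dv2 t)) ->
 is_derive (fun t => exp (c*t) * (v1 t - v2 t)^2) t (exp (c*t) * (c * (v1 t - v2 t)^2 + 2 * (v1 t - v2 t) * (dv1 t - dv2 t))).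
Proof.
intros H1 H2.
auto_derive.
- split; [exists (dv1 t); apply H1|split; [exists (dv2 t); apply H2|auto]].
- replace (Derive (fun x => v1 x) t) with (dv1 t) by (symmetry; apply is_derive_unique; apply H1).
  replace (Derive (fun x => v2 x) t) with (dv2 t) by (symmetry; apply is_derive_unique; apply H2).
  ring.
Qed.

Lemma dd_bound (a1 x y A : R) : Rabs a1 <= A ->
  Rabs ((x - y) * (a1 * Rabs x - a1 * Rabs y)) <= A * (x - y)^2.
Proof.
  intros Ha.
  replace (a1 * Rabs x - a1 * Rabs y) with (a1 * (Rabs x - Rabs y)) by ring.
  rewrite !Rabs_mult.
  assert (H1 : Rabs (Rabs x - Rabs y) <= Rabs (x - y)) by apply Rabs_triang_inv2.
  assert (H2 : 0 <= Rabs (x - y)) by apply Rabs_pos.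
  assert (H3 : 0 <= Rabs a1) by apply Rabs_pos.
  assert (H4: 0 <= Rabs (Rabs x - Rabs y)) by apply Rabs_pos.
  replace ((x - y)^2) with (Rabs (x - y) * Rabs (x - y)) by (rewrite <- Rabs_mult, Rabs_pos_eq; [ring|]; apply Rle_0_sqr).
  assert (Rabs a1 * Rabs (Rabs x - Rabs y) <= A * Rabs (x - y)).
  { apply Rmult_le_compat; auto. }
  nra.
Qed.

Lemma ode_uniq (a b v1 v2 : R -> R) A t0 :
  (forall t, Rabs (a t) <= A) ->
  (forall t, is_derive v1 t (a t * Rabs (v1 t) + b t)) ->
  (forall t, is_derive v2 t (a t * Rabs (v2 t) + b t)) ->
  v1 t0 = v2 t0 -> forall t, v1 t = v2 t.
Proof.
  intros Ha H1 H2 H0 t.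
  assert (Hd := fun c s => deriv_exp_sq v1 v2 _ _ c s H1 H2).
  assert (HB : forall s, Rabs ((v1 s - v2 s) * ((a s * Rabs (v1 s) + b s) - (a s * Rabs (v2 s) + b s))) <= A * (v1 s - v2 s)^2).
  { intros s. replace ((a s * Rabs (v1 s) + b s) - (a s * Rabs (v2 s) + b s)) with (a s * Rabs (v1 s) - a s * Rabs (v2 s)) by ring.
    apply dd_bound, Ha. }
  assert (Hsq : 0 <= (v1 t - v2 t)^2) by apply pow2_ge_0.
  destruct (Rle_dec t0 t).
  - (* h = exp(-2At) d^2 nonincreasing *)
    assert (M := mono_le (fun s => - (exp ((-2*A)*s) * (v1 s - v2 s)^2))
      (fun s => - (exp ((-2*A)*s) * ((-2*A) * (v1 s - v2 s)^2 + 2 * (v1 s - v2 s) * ((a s * Rabs (v1 s) + b s) - (a s * Rabs (v2 s) + b s))))) t0 t r). cbv beta in M.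

    assert (E: exp ((-2*A)*t) * (v1 t - v2 t)^2 <= 0).
    { assert (H0' : (v1 t0 - v2 t0)^2 = 0) by (rewrite H0; ring).
      rewrite H0' in M. cut (0 <= - (exp (-2 * A * t) * (v1 t - v2 t) ^ 2)); [lra|].
      replace 0 with (- (exp (-2 * A * t0) * 0)) at 1 by ring. apply M.
      - intros s _.
        apply (opp_deriv (fun s => exp (-2*A*s) * (v1 s - v2 s)^2) (fun s => exp (-2*A*s) * ((-2*A) * (v1 s - v2 s)^2 + 2 * (v1 s - v2 s) * ((a s * Rabs (v1 s) + b s) - (a s * Rabs (v2 s) + b s))))).
        intro s'. apply Hd.
      - intros s _. specialize (HB s). apply abs_le_both in HB.
        assert (0 < exp (-2*A*s)) by apply exp_pos.
        assert (0 <= -2 * A * (v1 s - v2 s) ^ 2 + 2 * (v1 s - v2 s) * (a s * Rabs (v1 s) + b s - (a s * Rabs (v2 s) + b s)) -> False \/ True) by tauto.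
        assert (-2 * A * (v1 s - v2 s) ^ 2 + 2 * (v1 s - v2 s) * (a s * Rabs (v1 s) + b s - (a s * Rabs (v2 s) + b s)) <= 0) by lra.
        nra. }
    assert (0 < exp ((-2*A)*t)) by apply exp_pos.
    assert ((v1 t - v2 t)^2 <= 0) by nra. nra.
  - assert (M := mono_le (fun s => (exp ((2*A)*s) * (v1 s - v2 s)^2))
      (fun s => (exp ((2*A)*s) * ((2*A) * (v1 s - v2 s)^2 + 2 * (v1 s - v2 s) * ((a s * Rabs (v1 s) + b s) - (a s * Rabs (v2 s) + b s))))) t t0 ltac:(lra)). cbv beta in M.

    assert (E: exp ((2*A)*t) * (v1 t - v2 t)^2 <= 0).
    { assert (H0' : (v1 t0 - v2 t0)^2 = 0) by (rewrite H0; ring).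
      rewrite H0' in M. rewrite Rmult_0_r in M. apply M.
      - intros s _. apply Hd.
      - intros s _. specialize (HB s). apply abs_le_both in HB.
        assert (0 < exp (2*A*s)) by apply exp_pos.
        assert (0 <= 2 * A * (v1 s - v2 s) ^ 2 + 2 * (v1 s - v2 s) * (a s * Rabs (v1 s) + b s - (a s * Rabs (v2 s) + b s))) by lra.
        nra. }
    assert (0 < exp ((2*A)*t)) by apply exp_pos.
    assert ((v1 t - v2 t)^2 <= 0) by nra. nra.
Qed.

Lemma exp_le x y : x <= y -> exp x <= exp y.
Proof. intros H. destruct (Req_dec x y) as [->|]; [lra|]. left. apply exp_increasing. lra. Qed.

Lemma sin_2p t : sin (t + 2*PI) = sin t.
Proof. rewrite sin_plus, sin_2PI, cos_2PI. ring. Qed.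
Lemma cos_2p t : cos (t + 2*PI) = cos t.
Proof. rewrite cos_plus, sin_2PI, cos_2PI. ring. Qed.

Lemma trig_periodic f : trig_poly f -> forall t, f (t + 2*PI) = f t.
Proof. intros [l Hl] t. rewrite !Hl. rewrite sin_2p, cos_2p. reflexivity. Qed.

Lemma pow_abs_le1 x n : Rabs x <= 1 -> Rabs (x ^ n) <= 1.
Proof.
  intros H. rewrite <- RPow_abs. induction n as [|n IH]; simpl; [lra|].
  assert (0 <= Rabs x) by apply Rabs_pos.
  assert (0 <= Rabs x ^ n) by (apply pow_le; auto).
  nra.
Qed.

Lemma trig_bounded f : trig_poly f -> exists A, 0 <= A /\ forall t, Rabs (f t) <= A.
Proof.
  intros [l Hl].
  assert (forall l : list (nat * nat * R), exists A, 0 <= A /\ forall t, Rabs (fold_right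
      (fun m acc => let '(i, j, c) := m in c * sin t ^ i * cos t ^ j + acc) 0 l) <= A).
  { clear. intro l. induction l as [|[[i j] c] l IH].
    - exists 0. split; [lra|]. intros t. simpl. rewrite Rabs_R0. lra.
    - destruct IH as [A [HA HB]]. exists (Rabs c + A). split.
      + assert (0 <= Rabs c) by apply Rabs_pos. lra.
      + intros t. simpl. eapply Rle_trans; [apply Rabs_triang|].
        rewrite !Rabs_mult.
        assert (H1 := pow_abs_le1 (sin t) i (Rabs_le _ _ (SIN_bound t))).
        assert (H2 := pow_abs_le1 (cos t) j (Rabs_le _ _ (COS_bound t))).
        assert (0 <= Rabs c) by apply Rabs_pos.
        assert (0 <= Rabs (sin t ^ i)) by apply Rabs_pos.
        assert (0 <= Rabs (cos t ^ j)) by apply Rabs_pos.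
        specialize (HB t).
        assert (Rabs c * Rabs (sin t ^ i) <= Rabs c) by nra.
        assert (Rabs c * Rabs (sin t ^ i) * Rabs (cos t ^ j) <= Rabs c) by nra.
        lra. }
  destruct (H l) as [A [HA HB]]. exists A. split; auto. intros t. rewrite Hl. apply HB.
Qed.

Lemma sol_deriv a b u : is_solution_map a b u -> forall x t,
  Derive (fun s => u s x) t = a t * Rabs (u t x) + b t.
Proof. intros Hu x t. apply is_derive_unique. apply (proj2 (Hu x)). Qed.

Lemma sol_mono a b u A : is_solution_map a b u -> (forall t, Rabs (a t) <= A) ->
  forall x y, x < y -> forall t, u t x < u t y.
Proof.
  intros Hu Ha x y Hxy t.
  destruct (Rlt_dec (u t x) (u t y)) as [|Hn]; auto. exfalso.
  set (d := fun s => u s y - u s x).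
  assert (Hc : continuity d).
  { apply (deriv_cont d (fun s => (a s * Rabs (u s y) + b s) - (a s * Rabs (u s x) + b s))).
    intro s. unfold d. apply (is_derive_minus (fun s => u s y) (fun s => u s x)); apply (proj2 (Hu _)). }
  assert (H0 : d 0 = y - x) by (unfold d; rewrite (proj1 (Hu x)), (proj1 (Hu y)); ring).
  assert (Ht : d t <= 0) by (unfold d; lra).
  assert (exists s, d s = 0) as [s Hs].
  { destruct (Rle_dec 0 t).
    - destruct (ivt_pos_neg d 0 t Hc r) as [s [_ Hs]]; [|eauto].
      rewrite H0. assert (0 <= (y - x) * - d t) by (apply Rmult_le_pos; lra). lra.
    - destruct (ivt_pos_neg d t 0 Hc ltac:(lra)) as [s [_ Hs]]; [|eauto].
      rewrite H0. assert (0 <= (y - x) * - d t) by (apply Rmult_le_pos; lra). lra. }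
  assert (E := ode_uniq a b (fun s => u s y) (fun s => u s x) A s Ha
     (proj2 (Hu y)) (proj2 (Hu x)) ltac:(unfold d in Hs; simpl; lra) 0).
  simpl in E. rewrite (proj1 (Hu x)), (proj1 (Hu y)) in E. lra.
Qed.

Lemma sol_periodic a b u A x0 : is_solution_map a b u -> (forall t, Rabs (a t) <= A) ->
  trig_poly a -> trig_poly b -> u (2*PI) x0 = x0 ->
  forall t, u (t + 2*PI) x0 = u t x0.
Proof.
  intros Hu Ha Tpa Tpb Hp.
  apply (ode_uniq a b (fun t => u (t + 2*PI) x0) (fun t => u t x0) A 0 Ha).
  - intros t.
    assert (D := is_derive_comp (fun s => u s x0) (fun t => t + 2*PI) t
      (a (t + 2*PI) * Rabs (u (t + 2*PI) x0) + b (t + 2*PI)) 1 (proj2 (Hu x0) _)).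
    rewrite (trig_periodic a Tpa), (trig_periodic b Tpb) in D.
    replace (a t * Rabs (u (t + 2 * PI) x0) + b t) with
      (scal 1 (a t * Rabs (u (t + 2 * PI) x0) + b t)) by (first [exact (scal_one _) | symmetry; exact (scal_one _)]).
    apply D. auto_derive; auto; ring.
  - apply (proj2 (Hu x0)).
  - simpl. rewrite Rplus_0_l, Hp, (proj1 (Hu x0)). auto.
Qed.

Lemma periodic_ext (v : R -> R) (P : R -> Prop) : (forall t, v (t + 2*PI) = v t) ->
  (forall t, 0 <= t <= 2*PI -> P (v t)) -> forall t, P (v t).
Proof.
  intros Hp HP.
  assert (Hpi := PI_RGT_0).
  assert (Hn : forall n, forall t, -(2*PI) * INR n <= t <= 2*PI * (INR n + 1) -> P (v t)).
  { induction n as [|n IH]; intros t Ht.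
    - simpl in Ht. destruct (Rle_dec 0 t).
      + apply HP. lra.
      + replace t with ((t + 2*PI) - 2*PI) by ring.
        rewrite <- (Hp (t + 2*PI - 2*PI)). replace (t + 2 * PI - 2 * PI + 2 * PI) with (t + 2*PI) by ring.
        (* t in [-2pi*0, ...]: impossible *) lra.
    - rewrite S_INR in Ht.
      destruct (Rle_dec t (2*PI * (INR n + 1))) as [H1|H1].
      + destruct (Rle_dec (-(2*PI) * INR n) t) as [H2|H2].
        * apply IH; lra.
        * rewrite <- Hp. apply IH. split; [lra|].
          assert (0 <= INR n) by apply pos_INR. nra.
      + replace t with ((t - 2*PI) + 2*PI) by ring. rewrite Hp. apply IH.
        assert (0 <= INR n) by apply pos_INR. split; nra. }
  intros t.
  destruct (nfloor_ex (Rabs t / (2*PI))) as [n [_ Hn2]].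
  { apply Rmult_le_pos; [apply Rabs_pos|]. left. apply Rinv_0_lt_compat. lra. }
  apply (Hn (S n)). rewrite S_INR.
  assert (Rabs t < 2*PI * (INR n + 1)).
  { apply Rmult_lt_compat_l with (r := 2*PI) in Hn2; [|lra].
    replace (2 * PI * (Rabs t / (2 * PI))) with (Rabs t) in Hn2 by (field; lra). lra. }
  assert (0 <= INR n) by apply pos_INR.
  unfold Rabs in *. destruct Rcase_abs; split; try nra.
Qed.

Lemma max_deriv0 f l c : is_derive f c l -> (forall x, f x <= f c) -> l = 0.
Proof.
  intros H Hm. apply is_derive_Reals in H.
  exact (deriv_maximum f (c-1) (c+1) c (exist _ l H) ltac:(lra) ltac:(lra) (fun x _ _ => Hm x)).
Qed.

Lemma large_pos (al be v : R -> R) A B n : 0 <= A -> 0 <= B ->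
  (forall t, Rabs (al t) <= A) -> (forall t, Rabs (be t) <= B) ->
  (forall t, is_derive v t (al t * Rabs (v t) + be t)) ->
  2*PI*(B*exp(2*PI*A)) < v 0 ->
  card_set (fun t => 0 <= t <= 2*PI /\ v t = 0) n ->
  forall t, 0 <= t <= 2*PI -> v t <> 0.
Proof.
  intros HA HB Ha Hb Hd Hv0 Hc t1 Ht1 Hz1.
  assert (Hpi := PI_RGT_0).
  destruct (card_remove _ _ t1 Hc (conj Ht1 Hz1)) as [k [-> _]].
  destruct (card_min _ _ Hc) as [z [[Hz Hfz] Hmin]].
  assert (Hz0 : 0 < z).
  { destruct (Req_dec z 0) as [->|]; [|lra].
    assert (0 <= 2*PI*(B*exp(2*PI*A))).
    { apply Rmult_le_pos; [lra|]. apply Rmult_le_pos; auto. left; apply exp_pos. }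
    lra. }
  set (C := B * exp (2*PI*A)).
  assert (Hnn : forall s, 0 <= s <= z -> 0 <= v s).
  { intros s Hs. destruct (Req_dec s 0) as [->|]; [assert (0 <= 2*PI*C) by (unfold C; apply Rmult_le_pos; [lra|]; apply Rmult_le_pos; auto; left; apply exp_pos) ; unfold C in *; lra|].
    destruct (Req_dec s z) as [->|]; [lra|].
    left. apply (right_pos v (fun t => al t * Rabs (v t) + be t) 0 s Hd); [lra| |].
    - intros t Ht Hvt. assert (z <= t) by (apply Hmin; split; [lra|auto]). lra.
    - left. assert (0 <= 2*PI*C) by (unfold C; apply Rmult_le_pos; [lra|]; apply Rmult_le_pos; auto; left; apply exp_pos). unfold C in *. lra. }
  assert (M := mono_le (fun t => exp (A*t) * v t + C * t)
     (fun t => exp (A*t) * (A * v t + (al t * Rabs (v t) + be t)) + C) 0 z ltac:(lra)).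
  cbv beta in M.
  assert (HM : exp (A*0) * v 0 + C * 0 <= exp (A*z) * v z + C * z).
  { apply M.
    - intros t _. auto_derive.
      + exists (al t * Rabs (v t) + be t). apply Hd.
      + replace (Derive (fun x => v x) t) with (al t * Rabs (v t) + be t) by (symmetry; apply is_derive_unique; apply Hd).
        ring.
    - intros t Ht. specialize (Hnn t Ht). rewrite (Rabs_pos_eq (v t) Hnn).
      assert (H1 := abs_le_both _ _ (Ha t)). assert (H2 := abs_le_both _ _ (Hb t)).
      assert (E1 : exp (A*t) <= exp (2*PI*A)) by (apply exp_le; nra).
      assert (E0 : 0 < exp (A*t)) by apply exp_pos.
      assert (0 <= (A + al t) * v t) by (apply Rmult_le_pos; lra).
      assert (exp (A*t) * be t >= - (exp (A*t) * B)) by nra.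
      assert (exp (A*t) * B <= exp (2*PI*A) * B) by nra.
      unfold C. nra. }
  rewrite Hfz, Rmult_0_r, Rmult_0_r, exp_0 in HM.
  assert (C * z <= C * (2*PI)) by (apply Rmult_le_compat_l; [unfold C; apply Rmult_le_pos; auto; left; apply exp_pos|lra]).
  unfold C in *. lra.
Qed.

Lemma in_some_cell (xs : nat -> R) r x0 :
  (forall i, (1 <= i < r)%nat -> xs i < xs (S i)) ->
  (forall i, (1 <= i <= r)%nat -> x0 <> xs i) ->
  exists i, (i <= r)%nat /\ in_cell xs r i x0.
Proof.
  intros Hxs Hnot. unfold in_cell.
  destruct r as [|r].
  - exists 0%nat. split; [lia|]. split; left; reflexivity.
  - destruct (Rlt_dec x0 (xs 1%nat)).
    + exists 0%nat. split; [lia|]. split; [left; reflexivity|right; auto].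
    + assert (H1 : xs 1%nat < x0) by (assert (x0 <> xs 1%nat) by (apply Hnot; lia); lra).
      assert (forall d j, (S r - j = d)%nat -> (1 <= j <= S r)%nat -> xs j < x0 ->
              exists i, (i <= S r)%nat /\ (i = 0%nat \/ xs i < x0) /\ (i = S r \/ x0 < xs (S i))).
      { induction d as [|d IH]; intros j Hd Hj Hx.
        - exists j. split; [lia|]. split; [right; auto|left; lia].
        - destruct (Rlt_dec x0 (xs (S j))).
          + exists j. split; [lia|]. split; [right; auto|right; auto].
          + apply (IH (S j)); [lia|lia|].
            assert (x0 <> xs (S j)) by (apply Hnot; lia). lra. }
      apply (H (S r - 1)%nat 1%nat); auto; lia.
Qed.

Theorem corollary3p2
  (a b : R -> R) (u : R -> R -> R) (r : nat) (xs : nat -> R) (x0 : R)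
  (Ha : trig_poly a) (Hb : trig_poly b) (Hbs : only_simple_zeros b)
  (Hu : is_solution_map a b u)
  (Hxs : forall i, (1 <= i < r)%nat -> xs i < xs (S i))
  (Hcells : forall i, (i <= r)%nat -> exists n : nat, forall x, in_cell xs r i x ->
      zeros_simple_on (fun t => u t x) 0 (2 * PI) /\
      card_set (fun t => 0 <= t <= 2 * PI /\ u t x = 0) n)
  (Hper : u (2 * PI) x0 = x0)
  (Hnot : forall i, (1 <= i <= r)%nat -> x0 <> xs i) :
  (exists n : nat, Nat.Even n /\ card_set (fun t => 0 <= t < 2 * PI /\ u t x0 = 0) n)
  /\ zeros_simple_on (fun t => u t x0) 0 (2 * PI)
  /\ ((1 <= r)%nat ->
        (xs r < x0 -> forall t, 0 < u t x0) /\
        (x0 < xs 1%nat -> forall t, u t x0 < 0))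
  /\ ((forall x, (exists t, 0 <= t <= 2 * PI /\ u t x = 0 /\ Derive (fun s => u s x) t = 0)
                 <-> exists i, (1 <= i <= r)%nat /\ x = xs i) ->
      (1 <= r)%nat -> xs 1%nat < x0 < xs r ->
      (exists t, 0 < u t x0) /\ (exists t, u t x0 < 0)).
Proof.
  assert (Hpi := PI_RGT_0).
  destruct (trig_bounded a Ha) as [A [HA0 HAb]].
  destruct (trig_bounded b Hb) as [B [HB0 HBb]].
  assert (Hpv := sol_periodic a b u A x0 Hu HAb Ha Hb Hper).
  set (v := fun t => u t x0).
  set (df := fun t => a t * Rabs (v t) + b t).
  assert (Hd : forall t, is_derive v t (df t)) by (intro t; apply (proj2 (Hu x0))).
  assert (Hv0 : v 0 = x0) by apply (proj1 (Hu x0)).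
  destruct (in_some_cell xs r x0 Hxs Hnot) as [i [Hi Hcell]].
  destruct (Hcells i Hi) as [n Hn].
  destruct (Hn x0 Hcell) as [Hsimp Hcard].
  assert (Hs : forall t, 0 <= t <= 2*PI -> v t = 0 -> df t <> 0).
  { intros t Ht Hvt. unfold df, v. rewrite <- (sol_deriv a b u Hu x0 t). apply Hsimp; auto. }
  assert (Hv2 : v (2*PI) = x0) by apply Hper.
  assert (Hb2 : b (2*PI) = b 0) by (rewrite <- (Rplus_0_l (2*PI)); apply (trig_periodic b Hb)).
  split; [|split; [exact Hsimp|split]].
  -
    destruct (Req_dec x0 0) as [Hx0|Hx0].
    + assert (P0 : 0 <= 0 <= 2*PI /\ u 0 x0 = 0) by (split; [lra|]; exact (eq_trans Hv0 Hx0)).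
      destruct (card_remove _ _ 0 Hcard P0) as [k [Hk Hc1]].
      assert (P2 : (0 <= 2*PI <= 2*PI /\ u (2*PI) x0 = 0) /\ 2*PI <> 0) by (split; [split; [lra|]; exact (eq_trans Hv2 Hx0)|lra]).
      destruct (card_remove _ _ (2*PI) Hc1 P2) as [k' [Hk' Hc2]].
      assert (Hc3 : card_set (fun t => 0 < t < 2*PI /\ v t = 0) k').
      { eapply card_ext; [|exact Hc2]. intros t. unfold v. split.
        - intros [[[Ht Hz] Hne0] Hne2]. split; [lra|auto].
        - intros [Ht Hz]. split; [split; [split; [lra|auto]|lra]|lra]. }
      assert (Par := parity v df (2*PI) Hd k' 0 ltac:(lra) Hs Hc3).
      assert (Hdf0 : df 0 = b 0) by (unfold df; rewrite Hv0, Hx0, Rabs_R0; ring).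
      assert (Hdf2 : df (2*PI) = b 0) by (unfold df; rewrite Hv2, Hx0, Rabs_R0, Hb2; ring).
      assert (Hb0 : b 0 <> 0) by (rewrite <- Hdf0; apply Hs; [lra|rewrite Hv0; auto]).
      assert (~ Nat.Even k').
      { rewrite Par. unfold pos_right, pos_left. rewrite Hdf0, Hdf2, Hv0, Hv2, Hx0.
        intros [H1 H2]. destruct (Rlt_dec 0 (b 0)).
        - assert (X : 0 < 0 \/ 0 = 0 /\ 0 < b 0) by (right; split; auto).
          specialize (H1 X). destruct H1 as [H1|[_ H1]]; lra.
        - assert (b 0 < 0) by lra.
          assert (X : 0 < 0 \/ 0 = 0 /\ b 0 < 0) by (right; split; auto).
          specialize (H2 X). destruct H2 as [H2|[_ H2]]; lra. }
      assert (P2' : 0 <= 2*PI <= 2*PI /\ u (2*PI) x0 = 0) by (split; [lra|]; exact (eq_trans Hv2 Hx0)).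
      destruct (card_remove _ _ (2*PI) Hcard P2') as [k2 [Hk2 Hc4]].
      exists k2. split.
      * assert (k2 = S k') by lia. subst k2. apply even_S. auto.
      * eapply card_ext; [|exact Hc4]. intros t. split.
        -- intros [[Ht Hz] Hne]. split; [lra|auto].
        -- intros [Ht Hz]. split; [split; [lra|auto]|lra].
    + assert (Hc3 : card_set (fun t => 0 < t < 2*PI /\ v t = 0) n).
      { eapply card_ext; [|exact Hcard]. intros t. unfold v. split.
        - intros [Ht Hz]. split; [|auto]. split.
          + destruct (Req_dec t 0) as [->|]; [|lra]. exfalso. apply Hx0. rewrite <- Hv0. exact Hz.
          + destruct (Req_dec t (2*PI)) as [->|]; [|lra]. exfalso. apply Hx0. rewrite <- Hv2. exact Hz.
        - intros [Ht Hz]. split; [lra|auto]. }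
      assert (Par := parity v df (2*PI) Hd n 0 ltac:(lra) Hs Hc3).
      exists n. split.
      * apply Par. unfold pos_right, pos_left. rewrite Hv0, Hv2.
        split; intros [H|[H _]]; [left; auto|lra|left; auto|lra].
      * eapply card_ext; [|exact Hcard]. intros t. split.
        -- intros [Ht Hz]. split; [|auto]. split; [lra|].
           destruct (Req_dec t (2*PI)) as [->|]; [|lra]. exfalso. apply Hx0. rewrite <- Hv2. exact Hz.
        -- intros [Ht Hz]. split; [lra|auto].
  - intros Hr. split.
    + intros Hx.
      assert (Hcr : (r <= r)%nat) by lia.
      destruct (Hcells r Hcr) as [m Hm].
      set (X := Rmax (xs r) 0 + 2*PI*(B*exp(2*PI*A)) + 1).
      assert (HX1 : xs r < X /\ 0 < X /\ 2*PI*(B*exp(2*PI*A)) < X).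
      { assert (0 <= 2*PI*(B*exp(2*PI*A))) by (apply Rmult_le_pos; [lra|]; apply Rmult_le_pos; auto; left; apply exp_pos).
        unfold X. generalize (Rmax_l (xs r) 0) (Rmax_r (xs r) 0). lra. }
      assert (HXc : in_cell xs r r X) by (split; [right; lra|left; auto]).
      destruct (Hm X HXc) as [_ HcX].
      assert (NZ := large_pos a b (fun t => u t X) A B m HA0 HB0 HAb HBb (proj2 (Hu X))
          ltac:(cbv beta; rewrite (proj1 (Hu X)); lra) HcX).
      assert (Hm0 : m = 0%nat).
      { destruct m as [|m]; auto. destruct (card_min _ _ HcX) as [z [[Hz Hfz] _]].
        exfalso. exact (NZ z Hz Hfz). }
      subst m.
      assert (Hpos : 0 < x0).
      { destruct (Rlt_dec 0 x0); auto. exfalso.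
        assert (H0c : in_cell xs r r 0).
        { split; [right|left; auto]. destruct (Req_dec x0 0); lra. }
        destruct (Hm 0 H0c) as [_ Hc0].
        apply (card_zero _ Hc0 0). split; [lra|]. apply (proj1 (Hu 0)). }
      destruct (Hm x0) as [_ Hc0]; [split; [right; auto|left; auto]|].
      assert (Hv : forall t, 0 <= t <= 2*PI -> 0 < v t).
      { intros t Ht. destruct (Req_dec t 0) as [->|]; [rewrite Hv0; auto|].
        apply (right_pos v df 0 t Hd); [lra| |].
        - intros s Hs' Hvs. apply (card_zero _ Hc0 s). split; [lra|exact Hvs].
        - left. rewrite Hv0. auto. }
      apply (periodic_ext v (fun y => 0 < y) Hpv Hv).
    + intros Hx.
      assert (Hc0r : (0 <= r)%nat) by lia.
      destruct (Hcells 0%nat Hc0r) as [m Hm].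
      set (X := Rmin (xs 1%nat) 0 - 2*PI*(B*exp(2*PI*A)) - 1).
      assert (HX1 : X < xs 1%nat /\ X < 0 /\ 2*PI*(B*exp(2*PI*A)) < - X).
      { assert (0 <= 2*PI*(B*exp(2*PI*A))) by (apply Rmult_le_pos; [lra|]; apply Rmult_le_pos; auto; left; apply exp_pos).
        unfold X. generalize (Rmin_l (xs 1%nat) 0) (Rmin_r (xs 1%nat) 0). lra. }
      assert (HXc : in_cell xs r 0 X) by (split; [left; auto|right; lra]).
      destruct (Hm X HXc) as [_ HcX].
      assert (HcX' : card_set (fun t => 0 <= t <= 2*PI /\ (fun s => - u s X) t = 0) m).
      { eapply card_ext; [|exact HcX]. intros t. simpl. split; intros [Ht Hz]; split; auto; lra. }
      assert (HAb' : forall t, Rabs ((fun s => - a s) t) <= A) by (intro t; simpl; rewrite Rabs_Ropp; auto).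
      assert (HBb' : forall t, Rabs ((fun s => - b s) t) <= B) by (intro t; simpl; rewrite Rabs_Ropp; auto).
      assert (HdX : forall t, is_derive (fun s => - u s X) t ((fun s => - a s) t * Rabs ((fun s => - u s X) t) + (fun s => - b s) t)).
      { intros t. cbv beta. rewrite Rabs_Ropp.
        replace (- a t * Rabs (u t X) + - b t) with (- (a t * Rabs (u t X) + b t)) by ring.
        apply (opp_deriv (fun s => u s X) (fun s => a s * Rabs (u s X) + b s)).
        intro s. apply (proj2 (Hu X)). }
      assert (NZ := large_pos (fun s => - a s) (fun s => - b s) (fun t => - u t X) A B m HA0 HB0 HAb' HBb' HdX
          ltac:(cbv beta; rewrite (proj1 (Hu X)); lra) HcX').
      assert (Hm0 : m = 0%nat).
      { destruct m as [|m]; auto. destruct (card_min _ _ HcX) as [z [[Hz Hfz] _]].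
        exfalso. apply (NZ z Hz). cbv beta. rewrite Hfz. ring. }
      subst m.
      assert (Hneg : x0 < 0).
      { destruct (Rlt_dec x0 0); auto. exfalso.
        assert (H0c : in_cell xs r 0 0).
        { split; [left; auto|right]. destruct (Req_dec x0 0); lra. }
        destruct (Hm 0 H0c) as [_ Hc0].
        apply (card_zero _ Hc0 0). split; [lra|]. apply (proj1 (Hu 0)). }
      destruct (Hm x0) as [_ Hc0]; [split; [left; auto|right; auto]|].
      assert (Hv : forall t, 0 <= t <= 2*PI -> v t < 0).
      { intros t Ht. destruct (Req_dec t 0) as [->|]; [rewrite Hv0; auto|].
        assert (0 < - v t); [|lra].
        apply (right_pos (fun s => - v s) (fun s => - df s) 0 t (opp_deriv v df Hd)); [lra| |].
        - intros s Hs' Hvs. apply (card_zero _ Hc0 s). split; [lra|]. unfold v in Hvs. lra.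
        - left. rewrite Hv0. lra. }
      apply (periodic_ext v (fun y => y < 0) Hpv Hv).
  - intros Hchar Hr [Hx1 Hxr]. split.
    + destruct (classic (exists t, 0 < u t x0)) as [|Hno]; auto. exfalso.
      assert (Hle : forall t, v t <= 0).
      { intros t. destruct (Rle_dec (v t) 0); auto. exfalso. apply Hno. exists t. unfold v in n0. lra. }
      assert (Hv : forall t, 0 <= t <= 2*PI -> v t < 0).
      { intros t Ht. destruct (Req_dec (v t) 0) as [H0|H0]; [|specialize (Hle t); lra].
        exfalso. apply (Hs t Ht H0). apply (max_deriv0 v (df t) t (Hd t)).
        intro x. rewrite H0. apply Hle. }
      destruct (proj2 (Hchar (xs 1%nat))) as [t [Ht [Hz _]]].
      { exists 1%nat. split; [lia|auto]. }
      assert (M := sol_mono a b u A Hu HAb (xs 1%nat) x0 Hx1 t).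
      specialize (Hv t Ht). unfold v in Hv. lra.
    + destruct (classic (exists t, u t x0 < 0)) as [|Hno]; auto. exfalso.
      assert (Hle : forall t, - v t <= 0).
      { intros t. destruct (Rle_dec (- v t) 0); auto. exfalso. apply Hno. exists t. unfold v in n0. lra. }
      assert (Hv : forall t, 0 <= t <= 2*PI -> 0 < v t).
      { intros t Ht. destruct (Req_dec (v t) 0) as [H0|H0]; [|specialize (Hle t); lra].
        exfalso. apply (Hs t Ht H0).
        assert (- df t = 0); [|lra].
        apply (max_deriv0 (fun s => - v s) (- df t) t (opp_deriv v df Hd t)).
        intro x. cbv beta. rewrite H0. specialize (Hle x). lra. }
      destruct (proj2 (Hchar (xs r))) as [t [Ht [Hz _]]].
      { exists r. split; [lia|auto]. }
      assert (M := sol_mono a b u A Hu HAb x0 (xs r) Hxr t).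
      specialize (Hv t Ht). unfold v in Hv. lra.
Qed.
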